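(* Let $p,q\in\Bbbk^\times$ with $q\neq1$, and let $\Phi:A(q)\to A(p)$ be a graded isomorphism of type I. Then there are scalars $k_1,\dots,k_4,\ell_1,\dots,\ell_4\in\Bbbk$ with $k_1k_4-k_2k_3\neq0$ and $\ell_1\ell_4-\ell_2\ell_3\neq0$ such that $\Phi(a)=k_1a+k_2c$, $\Phi(b)=\ell_1b+\ell_2d$, $\Phi(c)=k_3a+k_4c$, $\Phi(d)=\ell_3b+\ell_4d$. If $k_1\neq0$ and $k_4\neq0$, then $p=q$.
   Context: $\Bbbk$ is an algebraically closed field of characteristic zero. Paths are written left to right; path algebras are graded by path length. Let $Q$ be the quiver with vertices $e_1,e_2$, arrows $a,c:e_1\to e_2$ and $b,d:e_2\to e_1$; $A(q)=\Bbbk Q/(ab-cd,\ ba-q\,dc)$. A graded isomorphism $\Phi:A(q)\to A(p)$ is an algebra isomorphism for which there is a permutation $\sigma$ of the vertices with $\Phi$ mapping the degree-$k$ part $e_uA(q)_ke_v$ onto $e_{\sigma(u)}A(p)_ke_{\sigma(v)}$ for all $k,u,v$. It is of type I if $\Phi(e_1)=e_1$ and $\Phi(e_2)=e_2$. *)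

(* Defs.v *)
From HB Require Import structures.
From mathcomp Require Import all_boot all_order all_algebra.
Set Implicit Arguments. Unset Strict Implicit. Unset Printing Implicit Defensive.
Import Order.TTheory GRing.Theory Num.Theory.
Local Open Scope ring_scope.

(* The quiver Q: vertices e1 (encoded false), e2 (encoded true);
   arrows a,c : e1 -> e2 and b,d : e2 -> e1.
   Every path is determined by its source vertex and, at each step, a choice
   between the two arrows leaving the current vertex:
   from e1: false = a, true = c ;  from e2: false = b, true = d.
   So a path is a pair (source, choices); (v, [::]) is the trivial path e_v.
   Paths are written left to right. *)
Definition path := (bool * seq bool)%type.

Definition psrc (x : path) : bool := x.1.
Definition ptgt (x : path) : bool := x.1 (+) odd (size x.2).
Definition plen (x : path) : nat := size x.2.

Definition vtx (v : bool) : path := (v, [::]).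
Definition arr_a : path := (false, [:: false]).
Definition arr_c : path := (false, [:: true]).
Definition arr_b : path := (true, [:: false]).
Definition arr_d : path := (true, [:: true]).

Section PathAlgebra.
Variable K : fieldType.

(* Elements of the path algebra KQ, given as formal finite linear
   combinations of paths; two formal sums represent the same element of KQ
   iff they have the same coefficient function [coef]. *)
Definition kQ := seq (K * path)%type.

Definition coef (x : kQ) (w : path) : K := \sum_(z <- x | z.2 == w) z.1.

Definition kQadd (x y : kQ) : kQ := x ++ y.
Definition kQscale (c : K) (x : kQ) : kQ := [seq (c * z.1, z.2) | z <- x].
Definition kQsub (x y : kQ) : kQ := kQadd x (kQscale (-1) y).
Definition kQmul (x y : kQ) : kQ :=
  flatten [seq [seq (z.1 * w.1, (z.2.1, z.2.2 ++ w.2.2))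
               | w <- y & ptgt z.2 == psrc w.2] | z <- x].
Definition kQpath (w : path) : kQ := [:: (1, w)].
Definition kQone : kQ := [:: (1, vtx false); (1, vtx true)].
Definition kQsum (s : seq kQ) : kQ := flatten s.

(* relations of A(q): ab - cd  and  ba - q dc *)
Definition rel (q : K) (i : bool) : kQ :=
  if i then [:: (1, (true, [:: false; false])); (- q, (true, [:: true; true]))]
  else [:: (1, (false, [:: false; false])); (-1, (false, [:: true; true]))].

Definition in_ideal (q : K) (x : kQ) : Prop :=
  exists s : seq (K * path * bool * path)%type,
    coef x =1 coef (kQsum [seq kQscale t.1.1.1
                           (kQmul (kQmul (kQpath t.1.1.2) (rel q t.1.2))
                                  (kQpath t.2)) | t <- s]).

Definition eqA (q : K) (x y : kQ) : Prop := in_ideal q (kQsub x y).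

(* representatives of elements of e_u A_k e_v: combinations of paths of
   length k from u to v *)
Definition homog (k : nat) (u v : bool) (x : kQ) : Prop :=
  all (fun z => [&& plen z.2 == k, psrc z.2 == u & ptgt z.2 == v]) x.

(* Phi : KQ -> KQ represents (via representatives) a map A(q) -> A(p);
   it is an isomorphism of K-algebras A(q) -> A(p). *)
Definition is_alg_iso (q p : K) (Phi : kQ -> kQ) : Prop :=
  (forall x y, eqA q x y -> eqA p (Phi x) (Phi y)) /\
  [/\
      (forall x y, eqA p (Phi (kQadd x y)) (kQadd (Phi x) (Phi y))),
      (forall c x, eqA p (Phi (kQscale c x)) (kQscale c (Phi x))),
      (forall x y, eqA p (Phi (kQmul x y)) (kQmul (Phi x) (Phi y))),
      eqA p (Phi kQone) kQone &
      ((forall x y, eqA p (Phi x) (Phi y) -> eqA q x y) /\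
       (forall y, exists x, eqA p (Phi x) y))].

Definition is_graded_iso (q p : K) (Phi : kQ -> kQ) : Prop :=
  is_alg_iso q p Phi /\
  exists sigma : bool -> bool, bijective sigma /\
    forall (k : nat) (u v : bool),
      (forall x, homog k u v x ->
         exists y, homog k (sigma u) (sigma v) y /\ eqA p (Phi x) y) /\
      (forall y, homog k (sigma u) (sigma v) y ->
         exists x, homog k u v x /\ eqA p (Phi x) y).

Definition type_I (p : K) (Phi : kQ -> kQ) : Prop :=
  eqA p (Phi (kQpath (vtx false))) (kQpath (vtx false)) /\
  eqA p (Phi (kQpath (vtx true))) (kQpath (vtx true)).

End PathAlgebra.

(* Main.v *)
Require Import Defs.
From HB Require Import structures.
From mathcomp Require Import all_boot all_order all_algebra.
From mathcomp Require Import ring zify.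
Import GRing.Theory.
Local Open Scope ring_scope.

Section Aux.
Variable K : fieldType.
Implicit Types x y : kQ K.

Lemma kcoef_cat x y w : coef (x ++ y) w = coef x w + coef y w.
Proof. by rewrite /coef big_cat. Qed.

Lemma kcoef_nil w : coef ([::] : kQ K) w = 0.
Proof. by rewrite /coef big_nil. Qed.

Lemma kcoef_cons c u x w : coef ((c,u) :: x) w = (u == w)%:R * c + coef x w.
Proof. rewrite /coef big_cons /=. by case: (u == w); rewrite ?mul1r ?mul0r ?add0r. Qed.

Lemma kcoef_scale c x w : coef (kQscale c x) w = c * coef x w.
Proof. by rewrite /coef /kQscale big_map /= mulr_sumr. Qed.

Lemma kcoef_sub x y w : coef (kQsub x y) w = coef x w - coef y w.
Proof. by rewrite /kQsub /kQadd kcoef_cat kcoef_scale mulN1r. Qed.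

Lemma kcoef_path u w : coef (kQpath K u) w = (u == w)%:R.
Proof. by rewrite /kQpath kcoef_cons kcoef_nil mulr1 addr0. Qed.

Lemma kcoef_flatten (l : seq (kQ K)) w : coef (flatten l) w = \sum_(x <- l) coef x w.
Proof.
elim: l => [|x l IH]; first by rewrite big_nil kcoef_nil.
by rewrite /= kcoef_cat IH big_cons.
Qed.

Lemma kcoefE x w : coef x w = \sum_(z <- x) z.1 * (z.2 == w)%:R.
Proof.
rewrite /coef big_mkcond /=; apply: eq_bigr => z _.
by case: eqP; rewrite ?mulr1 ?mulr0.
Qed.

Lemma kcoef_mulE x y w : coef (kQmul x y) w =
  \sum_(z <- x) \sum_(v <- y) z.1 * v.1 *
     ((ptgt z.2 == psrc v.2) && ((z.2.1, z.2.2 ++ v.2.2) == w))%:R.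
Proof.
elim: x => [|z x IH]; first by rewrite big_nil /kQmul /= kcoef_nil.
rewrite big_cons -IH /kQmul /= kcoef_cat; congr (_ + _).
rewrite kcoefE big_map big_filter big_mkcond /=; apply: eq_bigr => v _.
by case: ifP => _ /=; rewrite ?mulr0 ?mulrA.
Qed.

Lemma indic (u v : Defs.path) s e1 e2 :
  ((ptgt u == psrc v) && ((u.1, u.2 ++ v.2) == (s,[:: e1; e2])))%:R =
  (u == (s,[::]))%:R * (v == (s,[::e1;e2]))%:R +
  (u == (s,[::e1]))%:R * (v == (~~s,[::e2]))%:R +
  (u == (s,[::e1;e2]))%:R * (v == (s,[::]))%:R :> K.
Proof.
rewrite -!natrM -!natrD; congr (_%:R).
case: u v => [ub ul] [vb vl].
case: ul => [|x1 [|x2 [|x3 ul]]]; case: vl => [|y1 [|y2 [|y3 vl]]];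
rewrite /ptgt /psrc /= ?xpair_eqE ?eqseq_cons ?andbF ?andFb ?andbT ?muln0 ?mul0n /=;
case: s; case: e1; case: e2;
repeat match goal with b : bool |- _ => case: b end; by [].
Qed.

Lemma kcoef_mul2 x y s e1 e2 : coef (kQmul x y) (s, [:: e1; e2]) =
  coef x (s,[::]) * coef y (s,[::e1;e2]) + coef x (s,[::e1]) * coef y (~~ s, [::e2])
  + coef x (s,[::e1;e2]) * coef y (s,[::]).
Proof.
rewrite kcoef_mulE !kcoefE !big_distrl -!big_split /=; apply: eq_bigr => z _.
rewrite !big_distrr -!big_split /=; apply: eq_bigr => v _.
rewrite indic. ring.
Qed.
End Aux.

Section Aux2.
Variable K : fieldType.
Implicit Types x y : kQ K.

Definition gen (q : K) (t : K * Defs.path * bool * Defs.path) : kQ K :=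
  kQscale t.1.1.1 (kQmul (kQmul (kQpath K t.1.1.2) (Defs.rel q t.1.2)) (kQpath K t.2)).

Lemma in_idealE q x : in_ideal q x <->
  exists s, forall w, coef x w = \sum_(t <- s) coef (gen q t) w.
Proof.
rewrite /in_ideal /kQsum; split=> -[s Hs]; exists s => w; rewrite Hs kcoef_flatten big_map //.
Qed.

Lemma in_ideal_ext q x y : coef x =1 coef y -> in_ideal q x -> in_ideal q y.
Proof. move=> E /in_idealE [s Hs]; apply/in_idealE; exists s => w; by rewrite -E. Qed.

Lemma in_ideal0 q x : (forall w, coef x w = 0) -> in_ideal q x.
Proof. move=> E; apply/in_idealE; exists [::] => w; by rewrite E big_nil. Qed.

Lemma in_ideal_add q x y : in_ideal q x -> in_ideal q y -> in_ideal q (x ++ y).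
Proof.
move=> /in_idealE [s Hs] /in_idealE [s' Hs']; apply/in_idealE; exists (s ++ s') => w.
by rewrite kcoef_cat Hs Hs' big_cat.
Qed.

Lemma in_ideal_scale q c x : in_ideal q x -> in_ideal q (kQscale c x).
Proof.
move=> /in_idealE [s Hs]; apply/in_idealE.
exists [seq (c * t.1.1.1, t.1.1.2, t.1.2, t.2) | t <- s] => w.
rewrite kcoef_scale Hs big_map mulr_sumr; apply: eq_bigr => t _.
by rewrite /gen /= !kcoef_scale mulrA.
Qed.

Lemma eqA_ext q x y : coef x =1 coef y -> eqA q x y.
Proof. move=> E; apply: in_ideal0 => w; by rewrite kcoef_sub E subrr. Qed.

Lemma eqA_sym q x y : eqA q x y -> eqA q y x.
Proof.
move=> H; move: (in_ideal_scale _ (-1) _ H); apply: in_ideal_ext => w.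
by rewrite kcoef_scale !kcoef_sub mulN1r opprB.
Qed.

Lemma eqA_trans q x y z : eqA q x y -> eqA q y z -> eqA q x z.
Proof.
move=> H1 H2; move: (in_ideal_add _ _ _ H1 H2); apply: in_ideal_ext => w.
by rewrite kcoef_cat !kcoef_sub addrA subrK.
Qed.

Lemma eqA_add q x x' y y' : eqA q x x' -> eqA q y y' -> eqA q (kQadd x y) (kQadd x' y').
Proof.
move=> H1 H2; move: (in_ideal_add _ _ _ H1 H2); apply: in_ideal_ext => w.
rewrite /kQadd kcoef_cat !kcoef_sub !kcoef_cat; ring.
Qed.

Lemma eqA_scale q c x y : eqA q x y -> eqA q (kQscale c x) (kQscale c y).
Proof.
move=> H; move: (in_ideal_scale _ c _ H); apply: in_ideal_ext => w.
by rewrite !kcoef_sub !kcoef_scale kcoef_sub mulrBr.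
Qed.

Arguments eqA_ext {q x y}.
Arguments eqA_sym {q x y}.
Arguments eqA_trans {q x y z}.
Arguments eqA_add {q x x' y y'}.
Arguments eqA_scale {q} c {x y}.
Lemma size_mul x y m n : all (fun z : K * Defs.path => size z.2.2 == m) x ->
  all (fun z : K * Defs.path => size z.2.2 == n) y ->
  all (fun z : K * Defs.path => size z.2.2 == (m + n)%N) (kQmul x y).
Proof.
move=> /allP hx /allP hy; apply/allP => e /flattenP [r /mapP [z zx ->]] /mapP [v].
rewrite mem_filter => /andP [_ vy] -> /=.
by rewrite size_cat (eqP (hx z zx)) (eqP (hy v vy)).
Qed.

Lemma kcoef_size0 x n w : all (fun z : K * Defs.path => size z.2.2 == n) x ->
  size w.2 != n -> coef x w = 0.
Proof.
move=> /allP hx hw; rewrite /coef big1_seq // => z /andP [/eqP zw zx].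
by move: (hx z zx); rewrite zw (negbTE hw).
Qed.

Lemma size_gen q t : all (fun z : K * Defs.path => size z.2.2 == (size t.1.1.2.2 + 2 + size t.2.2)%N) (gen q t).
Proof.
rewrite /gen all_map /=.
apply: (size_mul _ _ _ _ (size_mul _ _ (size t.1.1.2.2) 2 _ _)).
- by rewrite /= eqxx.
- by case: (t.1.2).
- by rewrite /= eqxx.
Qed.

Lemma gen_short (q : K) t w : (size w.2 < 2)%N -> coef (gen q t) w = 0.
Proof.
move=> hw; apply: (kcoef_size0 _ _ _ (size_gen q t)); apply/eqP => E; move: hw; rewrite E; lia.
Qed.

Lemma gen_deg2 (q : K) t :
  let g := gen q t in
  coef g (false,[::false;true]) = 0 /\ coef g (false,[::true;false]) = 0 /\
      coef g (false,[::false;false]) + coef g (false,[::true;true]) = 0 /\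
      coef g (true,[::false;true]) = 0 /\ coef g (true,[::true;false]) = 0 /\
      q * coef g (true,[::false;false]) + coef g (true,[::true;true]) = 0.
Proof.
case: t => [[[c [ub ul]] i] [vb vl]] /=.
have Z : forall ul vl, (0 < size ul + size vl)%N -> forall w : Defs.path, size w.2 = 2%N ->
   coef (gen q (c, (ub, ul), i, (vb, vl))) w = 0.
  move=> ul' vl' hs w hw; apply: (kcoef_size0 _ _ _ (size_gen q _)) => /=; rewrite hw; lia.
case: ul => [|x1 ul]; case: vl => [|y1 vl];
  try by (rewrite !Z //= ?mulr0 ?addr0; try lia; (repeat split); lia).
clear Z; case: ub; case: vb; case: i; rewrite /gen !kcoef_scale /kQmul /kQpath /= ?kcoef_cons ?kcoef_nil /=;
  rewrite ?mul1r ?mul0r ?addr0 ?add0r ?mulr0 ?mulr1; (repeat split); ring.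
Qed.
Lemma ideal_lin (q : K) x a1 a2 w1 w2 : in_ideal q x ->
  (forall t, a1 * coef (gen q t) w1 + a2 * coef (gen q t) w2 = 0) ->
  a1 * coef x w1 + a2 * coef x w2 = 0.
Proof.
case/in_idealE => s Hs H; rewrite !Hs !mulr_sumr -big_split big1 // => t _; exact: H.
Qed.

Lemma ideal_short (q : K) x w : in_ideal q x -> (size w.2 < 2)%N -> coef x w = 0.
Proof.
move=> hx hw; have := ideal_lin _ _ 1 0 w w hx.
rewrite !mul1r !mul0r !addr0; apply=> t; rewrite mul1r mul0r addr0; exact: gen_short.
Qed.

Lemma eqA_short (q : K) x y w : eqA q x y -> (size w.2 < 2)%N -> coef x w = coef y w.
Proof. move=> h hw; apply/eqP; rewrite -subr_eq0 -kcoef_sub; apply/eqP; exact: ideal_short h hw. Qed.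
Arguments eqA_short {q x y w}.

Definition comb (u : bool) (k k' : K) : kQ K :=
  kQadd (kQscale k (kQpath K (u,[::false]))) (kQscale k' (kQpath K (u,[::true]))).

Lemma coef_comb u k k' w : coef (comb u k k') w =
  k * ((u,[::false]) == w)%:R + k' * ((u,[::true]) == w)%:R.
Proof. by rewrite /comb /kQadd kcoef_cat !kcoef_scale !kcoef_path. Qed.

Lemma hom1 u v y : homog 1 u v y -> coef y =1 coef (comb u (coef y (u,[::false])) (coef y (u,[::true]))).
Proof.
move=> /allP hy w; rewrite coef_comb.
have [<-|n0] := eqVneq (u,[::false]) w.
  by rewrite xpair_eqE eqxx /=; ring.
have [<-|n1] := eqVneq (u,[::true]) w.
  by rewrite /=; ring.
rewrite /=; suff -> : coef y w = 0 by ring.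
rewrite /coef big1_seq // => z /andP [/eqP zw zy].
move: (hy z zy); rewrite /plen /psrc zw.
case: w zw n0 n1 => wb [|e [|e' l]] //= _; rewrite ?andbF //.
by move=> n0 n1 /andP [/eqP E _]; move: n0 n1; rewrite E; case: e; rewrite eqxx. 
Qed.

Arguments hom1 {u v y}.

Lemma phi_lin (q p : K) (Phi : kQ K -> kQ K)
  (Hresp : forall x y, eqA q x y -> eqA p (Phi x) (Phi y))
  (Hadd : forall x y, eqA p (Phi (kQadd x y)) (kQadd (Phi x) (Phi y)))
  (Hsc : forall c x, eqA p (Phi (kQscale c x)) (kQscale c (Phi x)))
  u v x : homog 1 u v x -> eqA p (Phi x)
     (kQadd (kQscale (coef x (u,[::false])) (Phi (kQpath K (u,[::false]))))
            (kQscale (coef x (u,[::true])) (Phi (kQpath K (u,[::true]))))).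
Proof.
move=> hx; apply: eqA_trans (Hresp _ _ (eqA_ext (hom1 hx))) _.
apply: eqA_trans (Hadd _ _) _; apply: eqA_add; exact: Hsc.
Qed.

Arguments phi_lin {q p Phi} Hresp Hadd Hsc {u v x}.

Lemma det_nz (q p : K) (Phi : kQ K -> kQ K)
  (Hresp : forall x y, eqA q x y -> eqA p (Phi x) (Phi y))
  (Hadd : forall x y, eqA p (Phi (kQadd x y)) (kQadd (Phi x) (Phi y)))
  (Hsc : forall c x, eqA p (Phi (kQscale c x)) (kQscale c (Phi x)))
  u (Hg2 : forall y, homog 1 u (~~u) y -> exists x, homog 1 u (~~u) x /\ eqA p (Phi x) y)
  k1 k2 k3 k4 :
  eqA p (Phi (kQpath K (u,[::false]))) (comb u k1 k2) ->
  eqA p (Phi (kQpath K (u,[::true]))) (comb u k3 k4) ->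
  k1 * k4 - k2 * k3 != 0.
Proof.
move=> Ha Hc.
have key : forall y, homog 1 u (~~u) y -> exists al be, forall w, (size w.2 < 2)%N ->
    coef y w = al * coef (comb u k1 k2) w + be * coef (comb u k3 k4) w.
  move=> y hy; case: (Hg2 y hy) => x [hx Ex]; exists (coef x (u,[::false])), (coef x (u,[::true])) => w hw.
  have E := eqA_trans (eqA_sym Ex) (eqA_trans (phi_lin Hresp Hadd Hsc hx)
                 (eqA_add (eqA_scale _ Ha) (eqA_scale _ Hc))).
  by rewrite (eqA_short E hw) /kQadd kcoef_cat !kcoef_scale.
have h0 : homog 1 u (~~u) (kQpath K (u,[::false])) by rewrite /homog /= /ptgt /= !eqxx; case: u {Ha Hc Hg2 key}.
have h1 : homog 1 u (~~u) (kQpath K (u,[::true])) by rewrite /homog /= /ptgt /= !eqxx; case: u {Ha Hc Hg2 key h0}.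
case: (key _ h0) => al [be H0]; case: (key _ h1) => al' [be' H1].
have := H0 (u,[::false]) isT; have := H0 (u,[::true]) isT.
have := H1 (u,[::false]) isT; have := H1 (u,[::true]) isT.
rewrite !coef_comb !kcoef_path !eqxx !xpair_eqE !eqxx /=.
rewrite !mulr1 !mulr0 !addr0 !add0r => e1 e2 e3 e4.
apply/eqP => D.
have : (al * k1 + be * k3) * (al' * k2 + be' * k4) - (al * k2 + be * k4) * (al' * k1 + be' * k3)
   = (al * be' - be * al') * (k1 * k4 - k2 * k3) by ring.
rewrite D mulr0 -e1 -e2 -e3 -e4 mulr1 mulr0 subr0 => /eqP; by rewrite oner_eq0.
Qed.


Lemma comb_short (p : K) X u k k' : eqA p X (comb u k k') ->
  (forall b, coef X (b,[::]) = 0) /\ coef X (u,[::false]) = k /\ coef X (u,[::true]) = k'.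
Proof.
move=> E; split; last split.
- by move=> b; rewrite (eqA_short E) // coef_comb !xpair_eqE /= !andbF mulr0 mulr0 addr0.
- by rewrite (eqA_short E) // coef_comb !xpair_eqE !eqxx /=; ring.
- by rewrite (eqA_short E) // coef_comb !xpair_eqE !eqxx /=; ring.
Qed.

Lemma arrow_img (p : K) (Phi : kQ K -> kQ K) u
  (Hg1 : forall x, homog 1 u (~~u) x -> exists y, homog 1 u (~~u) y /\ eqA p (Phi x) y) e :
  exists k k', eqA p (Phi (kQpath K (u,[::e]))) (comb u k k').
Proof.
have h : homog 1 u (~~u) (kQpath K (u,[::e])) by rewrite /homog /= /ptgt /= !eqxx; case: u {Hg1}.
case: (Hg1 _ h) => y [hy E].
exists (coef y (u,[::false])), (coef y (u,[::true])); exact: eqA_trans E (eqA_ext (hom1 hy)).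
Qed.

Lemma final_alg (p q k1 k2 k3 k4 l1 l2 l3 l4 : K) : q != 1 -> l1 * l4 - l2 * l3 != 0 -> k1 != 0 -> k4 != 0 ->
 k1 * l2 - k3 * l4 = 0 -> k2 * l1 - k4 * l3 = 0 -> (k1 * l1 - k3 * l3) + (k2 * l2 - k4 * l4) = 0 ->
 l1 * k2 - q * (l3 * k4) = 0 -> l2 * k1 - q * (l4 * k3) = 0 -> p * (l1 * k1 - q * (l3 * k3)) + (l2 * k2 - q * (l4 * k4)) = 0 ->
 p = q.
Proof.
move=> q1 dl k1n k4n E1 E2 E3 E4 E5 E6.
have q1' : 1 - q != 0 by rewrite subr_eq0 eq_sym.
have k3l4 : k3 * l4 = 0.
  have H : (1 - q) * (k3 * l4) = (l2 * k1 - q * (l4 * k3)) - (k1 * l2 - k3 * l4) by ring.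
  move: H; rewrite E5 E1 subr0 => /eqP; rewrite mulf_eq0 (negbTE q1') /= => /eqP //.
have k4l3 : k4 * l3 = 0.
  have H : (1 - q) * (k4 * l3) = (l1 * k2 - q * (l3 * k4)) - (k2 * l1 - k4 * l3) by ring.
  move: H; rewrite E4 E2 subr0 => /eqP; rewrite mulf_eq0 (negbTE q1') /= => /eqP //.
have l2z : l2 = 0.
  have : k1 * l2 = 0 by rewrite -E1 k3l4 subr0.
  by move/eqP; rewrite mulf_eq0 (negbTE k1n) /= => /eqP.
have l3z : l3 = 0.
  by move: k4l3 => /eqP; rewrite mulf_eq0 (negbTE k4n) /= => /eqP.
move: dl; rewrite l2z l3z mul0r subr0 mulf_eq0 negb_or => /andP [l1n l4n].
have k3z : k3 = 0 by move: k3l4 => /eqP; rewrite mulf_eq0 (negbTE l4n) orbF => /eqP.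
have k2z : k2 = 0.
  have : k2 * l1 = 0 by rewrite -E2 k4l3 subr0.
  by move/eqP; rewrite mulf_eq0 (negbTE l1n) orbF => /eqP.
move: E3 E6; rewrite l2z l3z k3z k2z => E3 E6.
have H : (p - q) * (k1 * l1) = (p * (l1 * k1 - q * (0 * 0)) + (0 * 0 - q * (l4 * k4))) - q * ((k1 * l1 - 0 * 0) + (0 * 0 - k4 * l4)) by ring.
move: H; rewrite E6 E3 mulr0 subr0 => /eqP; rewrite !mulf_eq0 (negbTE k1n) (negbTE l1n) /= subr_eq0 => /orP [/eqP //|//].
Qed.
End Aux2.

Arguments eqA_ext {K q x y}.
Arguments eqA_sym {K q x y}.
Arguments eqA_trans {K q x y z}.
Arguments eqA_add {K q x x' y y'}.
Arguments eqA_scale {K q} c {x y}.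
Arguments eqA_short {K q x y w}.
Arguments arrow_img {K p Phi u} Hg1 e.
Arguments det_nz {K q p Phi} Hresp Hadd Hsc {u} Hg2 {k1 k2 k3 k4}.
Arguments comb_short {K p X u k k'}.
Arguments gen_deg2 {K}.

Theorem lemma3p6 (K : closedFieldType) (hchar : [pchar K] =i pred0)
  (p q : K) (hp : p != 0) (hq : q != 0) (hq1 : q != 1)
  (Phi : kQ K -> kQ K)
  (hPhi : is_graded_iso q p Phi) (hI : type_I p Phi) :
  exists k1 k2 k3 k4 l1 l2 l3 l4 : K,
    ( k1 * k4 - k2 * k3 != 0 /\ l1 * l4 - l2 * l3 != 0 /\
        eqA p (Phi (kQpath K arr_a))
              (kQadd (kQscale k1 (kQpath K arr_a)) (kQscale k2 (kQpath K arr_c))) /\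
        eqA p (Phi (kQpath K arr_b))
              (kQadd (kQscale l1 (kQpath K arr_b)) (kQscale l2 (kQpath K arr_d))) /\
        eqA p (Phi (kQpath K arr_c))
              (kQadd (kQscale k3 (kQpath K arr_a)) (kQscale k4 (kQpath K arr_c))) /\
        eqA p (Phi (kQpath K arr_d))
              (kQadd (kQscale l3 (kQpath K arr_b)) (kQscale l4 (kQpath K arr_d))) /\
        (k1 != 0 -> k4 != 0 -> p = q)).
Proof.
case: hPhi => [[Hresp [Hadd Hsc Hmul Hone [Hinj Hsurj]]] [sigma [bij Hgr]]].
case: hI => He1 He2.
have s0 : sigma false = false.
  case E: (sigma false) => //.
  have hv : homog 0 false false (kQpath K (vtx false)) by [].
  case: ((Hgr 0%N false false).1 _ hv) => y []; rewrite E => /allP hy Ey.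
  have := @eqA_short _ _ _ _ (vtx false) (eqA_trans (eqA_sym He1) Ey) isT.
  rewrite kcoef_path eqxx /coef big1_seq /=.
    by rewrite mulr1n => /eqP; rewrite oner_eq0.
  by move=> z /andP [/eqP zw zy]; move: (hy z zy); rewrite zw.
have s1 : sigma true = true.
  case E: (sigma true) => //.
  have : sigma true = sigma false by rewrite E s0.
  by move/(bij_inj bij).
have Hg1 : forall u x, homog 1 u (~~u) x -> exists y, homog 1 u (~~u) y /\ eqA p (Phi x) y.
  case=> x hx; [have [H _] := Hgr 1%N true false | have [H _] := Hgr 1%N false true];
  rewrite s0 s1 in H; exact: H hx.
have Hg2 : forall u y, homog 1 u (~~u) y -> exists x, homog 1 u (~~u) x /\ eqA p (Phi x) y.
  case=> y hy; [have [_ H] := Hgr 1%N true false | have [_ H] := Hgr 1%N false true];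
  rewrite s0 s1 in H; exact: H hy.
have [k1 [k2 Ha]] := arrow_img (Hg1 false) false.
have [k3 [k4 Hc]] := arrow_img (Hg1 false) true.
have [l1 [l2 Hb]] := arrow_img (Hg1 true) false.
have [l3 [l4 Hd]] := arrow_img (Hg1 true) true.
have dk := det_nz Hresp Hadd Hsc (Hg2 false) Ha Hc.
have dl := det_nz Hresp Hadd Hsc (Hg2 true) Hb Hd.
exists k1, k2, k3, k4, l1, l2, l3, l4.
do 6 (split; first by []).
move=> k1n k4n.

pose A := kQpath K (false,[::false]); pose C := kQpath K (false,[::true]).
pose B := kQpath K (true,[::false]); pose D := kQpath K (true,[::true]).
have r1 : eqA q (kQmul A B) (kQmul C D).
  apply/in_idealE; exists [:: (1, vtx false, false, vtx false)] => w.
  rewrite big_cons big_nil addr0 /gen /A /B /C /D /kQsub /kQadd /kQscale /kQmul /kQpath /=.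
  rewrite !kcoef_cons kcoef_nil; ring.
have r2 : eqA q (kQmul B A) (kQscale q (kQmul D C)).
  apply/in_idealE; exists [:: (1, vtx true, true, vtx true)] => w.
  rewrite big_cons big_nil addr0 /gen /A /B /C /D /kQsub /kQadd /kQscale /kQmul /kQpath /=.
  rewrite !kcoef_cons kcoef_nil; ring.
have R1 := eqA_trans (eqA_sym (Hmul _ _)) (eqA_trans (Hresp _ _ r1) (Hmul _ _)).
have R2 := eqA_trans (eqA_sym (Hmul _ _)) (eqA_trans (Hresp _ _ r2)
             (eqA_trans (Hsc _ _) (eqA_scale q (Hmul _ _)))).
have [HA0 [HA1 HA2]] := comb_short Ha.
have [HC0 [HC1 HC2]] := comb_short Hc.
have [HB0 [HB1 HB2]] := comb_short Hb.
have [HD0 [HD1 HD2]] := comb_short Hd.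
have E1 := @ideal_lin K p _ 1 0 (false,[::false;true]) (false,[::false;true]) R1
  (fun t => ltac:(case: (gen_deg2 p t) => /= g1 [g2 [g3 [g4 [g5 g6]]]]; rewrite g1; ring)).
have E2 := @ideal_lin K p _ 1 0 (false,[::true;false]) (false,[::true;false]) R1
  (fun t => ltac:(case: (gen_deg2 p t) => /= g1 [g2 [g3 [g4 [g5 g6]]]]; rewrite g2; ring)).
have E3 := @ideal_lin K p _ 1 1 (false,[::false;false]) (false,[::true;true]) R1
  (fun t => ltac:(case: (gen_deg2 p t) => /= g1 [g2 [g3 [g4 [g5 g6]]]]; rewrite !mul1r; exact: g3)).
have E4 := @ideal_lin K p _ 1 0 (true,[::false;true]) (true,[::false;true]) R2
  (fun t => ltac:(case: (gen_deg2 p t) => /= g1 [g2 [g3 [g4 [g5 g6]]]]; rewrite g4; ring)).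
have E5 := @ideal_lin K p _ 1 0 (true,[::true;false]) (true,[::true;false]) R2
  (fun t => ltac:(case: (gen_deg2 p t) => /= g1 [g2 [g3 [g4 [g5 g6]]]]; rewrite g5; ring)).
have E6 := @ideal_lin K p _ p 1 (true,[::false;false]) (true,[::true;true]) R2
  (fun t => ltac:(case: (gen_deg2 p t) => /= g1 [g2 [g3 [g4 [g5 g6]]]]; rewrite mul1r; exact: g6)).
rewrite /A /B /C /D !kcoef_sub ?kcoef_scale !kcoef_mul2 /= ?HA0 ?HB0 ?HC0 ?HD0 ?HA1 ?HA2 ?HB1 ?HB2 ?HC1 ?HC2 ?HD1 ?HD2 in E1 E2 E3 E4 E5 E6.
apply: (@final_alg K p q k1 k2 k3 k4 l1 l2 l3 l4 hq1 dl k1n k4n).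
- by rewrite -E1; ring.
- by rewrite -E2; ring.
- by rewrite -E3; ring.
- by rewrite -E4; ring.
- by rewrite -E5; ring.
- by rewrite -E6; ring.
Qed.
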